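(* Let $0<r<1$ and $0\le\phi\le\pi/2$, and let $\{\rho_{\theta(\eta)}:\eta\in H\subset\mathbb{R}^2\}$ be a two-parameter smooth submodel of the full qubit model such that at some $\eta_0$ one has $\rho_{\theta(\eta_0)}=\rho_{(0,0,r)}$ and $$D_1:=\partial_{\eta^1}\rho_{\theta(\eta)}\big|_{\eta_0}=\sigma_1,\qquad D_2:=\partial_{\eta^2}\rho_{\theta(\eta)}\big|_{\eta_0}=\cos\phi\,\sigma_2+\sin\phi\sqrt{1-r^2}\,\sigma_3 .$$ Let $G=\begin{pmatrix}g_1&g_2\\ g_2&g_3\end{pmatrix}$ be real symmetric positive definite. Then the Holevo bound of this submodel at $\eta_0$ is $$C^H(G)=\mathrm{tr}\,G+2r\cos\phi\sqrt{\det G}-r^2\sin^2\phi\,g_1\qquad\text{if } r\,g_1\sin^2\phi<\sqrt{\det G}\cos\phi,$$ and $$C^H(G)=\mathrm{tr}\,G+\frac{\det G}{g_1}\Big(\frac{\cos\phi}{\sin\phi}\Big)^2\qquad\text{otherwise}.$$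
   Context: Full qubit model: $\rho_\theta=\frac12I+\sum_{i=1}^3\theta^i\sigma_i$ on $\mathbb{C}^2$, $\|\theta\|<1$, with $\sigma_1=\frac12\begin{pmatrix}0&1\\1&0\end{pmatrix}$, $\sigma_2=\frac12\begin{pmatrix}0&-i\\i&0\end{pmatrix}$, $\sigma_3=\frac12\begin{pmatrix}1&0\\0&-1\end{pmatrix}$. For a pair $\vec X=(X^1,X^2)$ of Hermitian $2\times2$ matrices, $Z^{k,j}(\vec X)=\mathrm{Tr}\,\rho_{(0,0,r)}X^kX^j$ and $C(G,\vec X)=\mathrm{tr}\sqrt G\,\mathrm{Re}Z(\vec X)\sqrt G+\mathrm{tr}|\sqrt G\,\mathrm{Im}Z(\vec X)\sqrt G|$, where $\mathrm{Re}W=(W+\bar W)/2$, $\mathrm{Im}W=(W-\bar W)/(2i)$, $|A|=(A^*A)^{1/2}$. The Holevo bound of the submodel at $\eta_0$ is $C^H(G)=\min\{C(G,\vec X):\mathrm{Tr}\,D_kX^j=\delta^j_k,\ j,k=1,2\}$. *)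

(* Defs.v *)
From mathcomp Require Import all_boot all_order all_algebra.
From mathcomp Require Import complex.
From mathcomp Require Import all_classical all_reals all_analysis.
Set Implicit Arguments. Unset Strict Implicit. Unset Printing Implicit Defensive.
Import Order.TTheory GRing.Theory Num.Theory ComplexField.
Local Open Scope ring_scope.
Local Open Scope complex_scope.

Section Qubit.
Variable R : realType.

(* Pauli matrices with the factor 1/2, as in the paper. *)
Definition sigma1 : 'M[R[i]]_2 :=
  \matrix_(a < 2, b < 2) (if a == b then 0 else 1 / 2).
Definition sigma2 : 'M[R[i]]_2 :=
  \matrix_(a < 2, b < 2)
    (if a == b then 0 else if (a == 0 :> nat) then - 'i / 2 else 'i / 2).
Definition sigma3 : 'M[R[i]]_2 :=
  \matrix_(a < 2, b < 2)
    (if a == b then (if (a == 0 :> nat) then 1 / 2 else - 1 / 2) else 0).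

Definition rho_theta (t1 t2 t3 : R) : 'M[R[i]]_2 :=
  (1 / 2) *: 1%:M + t1%:C *: sigma1 + t2%:C *: sigma2 + t3%:C *: sigma3.

Definition adjmx n (A : 'M[R[i]]_n) : 'M[R[i]]_n := (map_mx (fun z => z^*) A)^T.
Definition hermitian n (A : 'M[R[i]]_n) := adjmx A = A.

Definition Zmat (r : R) (X : 'I_2 -> 'M[R[i]]_2) : 'M[R[i]]_2 :=
  \matrix_(k < 2, j < 2) \tr (rho_theta 0 0 r *m X k *m X j).

(* Re W = (W + conj W)/2 and Im W = (W - conj W)/(2i), entrywise; these are
   real-valued, and we record them as real matrices. *)
Definition ReM n (W : 'M[R[i]]_n) : 'M[R]_n :=
  \matrix_(a < n, b < n) complex.Re ((W a b + (W a b)^*) / 2).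
Definition ImM n (W : 'M[R[i]]_n) : 'M[R]_n :=
  \matrix_(a < n, b < n) complex.Re ((W a b - (W a b)^*) / (2 * 'i)).

Definition psd n (A : 'M[R]_n) :=
  A^T = A /\ forall v : 'cV[R]_n, 0 <= (v^T *m A *m v) 0 0.
Definition posdef n (A : 'M[R]_n) :=
  A^T = A /\ forall v : 'cV[R]_n, v != 0 -> 0 < (v^T *m A *m v) 0 0.

Definition msqrt n (A : 'M[R]_n) : 'M[R]_n :=
  xget 0 [set S | psd S /\ S *m S = A].
Definition mabs n (A : 'M[R]_n) : 'M[R]_n := msqrt (A^T *m A).

Definition Ccost (r : R) (G : 'M[R]_2) (X : 'I_2 -> 'M[R[i]]_2) : R :=
  \tr (msqrt G *m ReM (Zmat r X) *m msqrt G)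
  + \tr (mabs (msqrt G *m ImM (Zmat r X) *m msqrt G)).

Definition feasible (D : 'I_2 -> 'M[R[i]]_2) (X : 'I_2 -> 'M[R[i]]_2) :=
  (forall j, hermitian (X j)) /\
  (forall j k : 'I_2, \tr (D k *m X j) = (j == k)%:R).

Definition holevo_bound_is (r : R) (D : 'I_2 -> 'M[R[i]]_2) (G : 'M[R]_2) (v : R) :=
  (exists X, feasible D X /\ Ccost r G X = v) /\
  (forall X, feasible D X -> v <= Ccost r G X).

Definition Dsub (r phi : R) (k : 'I_2) : 'M[R[i]]_2 :=
  if k == 0 :> nat then sigma1
  else (cos phi)%:C *: sigma2 + (sin phi * Num.sqrt (1 - r ^+ 2))%:C *: sigma3.

End Qubit.

(* Main.v *)
Require Import Defs.
From mathcomp Require Import all_boot all_order all_algebra.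
From mathcomp Require Import complex.
From mathcomp Require Import all_classical all_reals all_analysis.
From mathcomp Require Import ring lra.
Import Order.TTheory GRing.Theory Num.Theory ComplexField.
Set Implicit Arguments. Unset Strict Implicit. Unset Printing Implicit Defensive.
Local Open Scope ring_scope.

Definition mk2 (T : pzRingType) (a b c d : T) : 'M[T]_2 :=
  \matrix_(i < 2, j < 2)
    (if i == 0 :> nat then (if j == 0 :> nat then a else b)
     else (if j == 0 :> nat then c else d)).

Lemma ord2P (i : 'I_2) : i = 0 \/ i = 1.
Proof. case: i => [[|[|n]] Hi]; [left|right|by []]; exact: val_inj. Qed.

Lemma mk2E (T : pzRingType) (M : 'M[T]_2) :
  M = mk2 (M 0 0) (M 0 1) (M 1 0) (M 1 1).
Proof.
apply/matrixP => i j; rewrite !mxE.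
by case: (ord2P i) => ->; case: (ord2P j) => ->.
Qed.

Lemma mk2_mul (T : pzRingType) (a b c d e f g h : T) :
  mk2 a b c d *m mk2 e f g h =
  mk2 (a * e + b * g) (a * f + b * h) (c * e + d * g) (c * f + d * h).
Proof.
apply/matrixP => i j; rewrite !mxE !big_ord_recl big_ord0 !mxE /=.
by case: (ord2P i) => ->; case: (ord2P j) => -> /=; rewrite addr0.
Qed.

Lemma mk2_tr (T : pzRingType) (a b c d : T) : \tr (mk2 a b c d) = a + d.
Proof. by rewrite /mxtrace !big_ord_recl big_ord0 !mxE /= addr0. Qed.

Lemma mk2_det (T : comPzRingType) (a b c d : T) :
  \det (mk2 a b c d) = a * d - b * c.
Proof.
rewrite (expand_det_row _ 0) !big_ord_recl big_ord0 /cofactor.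
rewrite !det_mx11 !mxE /=. rewrite expr0 mul1r addr0 add0n /= expr1 mulN1r mulrN. done. Qed.

Lemma mk2_entries (T : pzRingType) (a b c d : T) :
  (mk2 a b c d 0 0 = a) * (mk2 a b c d 0 1 = b) *
  (mk2 a b c d 1 0 = c) * (mk2 a b c d 1 1 = d).
Proof. by rewrite !mxE. Qed.

Lemma mk2_add (T : pzRingType) (a b c d e f g h : T) :
  mk2 a b c d + mk2 e f g h = mk2 (a + e) (b + f) (c + g) (d + h).
Proof.
apply/matrixP => i j; rewrite !mxE.
by case: (ord2P i) => ->; case: (ord2P j) => ->.
Qed.

Lemma mk2_scale (T : pzRingType) (k a b c d : T) :
  k *: mk2 a b c d = mk2 (k * a) (k * b) (k * c) (k * d).
Proof.
apply/matrixP => i j; rewrite !mxE.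
by case: (ord2P i) => ->; case: (ord2P j) => ->.
Qed.

Lemma mk2_tp (T : pzRingType) (a b c d : T) : (mk2 a b c d)^T = mk2 a c b d.
Proof.
apply/matrixP => i j; rewrite !mxE.
by case: (ord2P i) => ->; case: (ord2P j) => ->.
Qed.

Lemma mk2_1 (T : pzRingType) : (1%:M : 'M[T]_2) = mk2 1 0 0 1.
Proof.
apply/matrixP => i j; rewrite !mxE.
by case: (ord2P i) => ->; case: (ord2P j) => ->.
Qed.

Section C.
Local Open Scope complex_scope.
Variable R : realType.
Implicit Types (x y z w : R[i]) (r a b phi : R).

Lemma ceq x y : complex.Re x = complex.Re y -> complex.Im x = complex.Im y -> x = y.
Proof. by case: x => a b; case: y => c d /= -> ->. Qed.

Lemma cReD x y : complex.Re (x + y) = complex.Re x + complex.Re y.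
Proof. by case: x => a b; case: y => c d. Qed.
Lemma cImD x y : complex.Im (x + y) = complex.Im x + complex.Im y.
Proof. by case: x => a b; case: y => c d. Qed.
Lemma cReN x : complex.Re (- x) = - complex.Re x.
Proof. by case: x => a b. Qed.
Lemma cImN x : complex.Im (- x) = - complex.Im x.
Proof. by case: x => a b. Qed.
Lemma cReM x y : complex.Re (x * y) = complex.Re x * complex.Re y - complex.Im x * complex.Im y.
Proof. by case: x => a b; case: y => c d. Qed.
Lemma cImM x y : complex.Im (x * y) = complex.Re x * complex.Im y + complex.Im x * complex.Re y.
Proof. by case: x => a b; case: y => c d. Qed.
Lemma cRe0 : complex.Re (0 : R[i]) = 0. Proof. by []. Qed.
Lemma cIm0 : complex.Im (0 : R[i]) = 0. Proof. by []. Qed.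
Lemma cRe1 : complex.Re (1 : R[i]) = 1. Proof. by []. Qed.
Lemma cIm1 : complex.Im (1 : R[i]) = 0. Proof. by []. Qed.
Lemma cReC (a : R) : complex.Re (a%:C) = a. Proof. by []. Qed.
Lemma cImC (a : R) : complex.Im (a%:C) = 0. Proof. by []. Qed.
Lemma cReK (a b : R) : complex.Re (a +i* b) = a. Proof. by []. Qed.
Lemma cImK (a b : R) : complex.Im (a +i* b) = b. Proof. by []. Qed.
Lemma cReJ x : complex.Re (x^*) = complex.Re x. Proof. by case: x. Qed.
Lemma cImJ x : complex.Im (x^*) = - complex.Im x. Proof. by case: x. Qed.

Lemma inv2C : (2 : R[i])^-1 = (2^-1 : R)%:C.
Proof.
have -> : (2 : R[i]) = (2 : R)%:C by rewrite rmorph_nat.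
by rewrite -fmorphV.
Qed.

Definition cE := (cReD, cImD, cReN, cImN, cReM, cImM, cRe0, cIm0, cRe1, cIm1,
  cReC, cImC, cReK, cImK, cReJ, cImJ).

Lemma twoC_neq0 : (2 : R[i]) != 0.
Proof. by rewrite pnatr_eq0. Qed.

Lemma cRe_half x : complex.Re ((x + x^*) / 2) = complex.Re x.
Proof. rewrite inv2C !cE. by field. Qed.

Lemma cIm_half x : complex.Re ((x - x^*) / (2 * 'i)) = complex.Im x.
Proof.
rewrite subcJ.
have -> : 2 * (complex.Im x)%:C * 'i = (complex.Im x)%:C * (2 * 'i) :> R[i] by ring.
rewrite mulfK //.
by rewrite mulf_neq0 // ?twoC_neq0 // eq_complex /= oner_eq0 andbF.
Qed.


Ltac cx := apply: ceq; rewrite ?inv2C !cE.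

Lemma sigma1E : sigma1 R = mk2 0 (2^-1)%:C (2^-1)%:C 0.
Proof.
apply/matrixP => i j; rewrite !mxE.
case: (ord2P i) => ->; case: (ord2P j) => -> //=; cx; by field.
Qed.

Lemma sigma2E : sigma2 R = mk2 0 (0 +i* (- 2^-1)) (0 +i* 2^-1) 0.
Proof.
apply/matrixP => i j; rewrite !mxE.
case: (ord2P i) => ->; case: (ord2P j) => -> //=; cx; by field.
Qed.

Lemma sigma3E : sigma3 R = mk2 (2^-1)%:C 0 0 (- 2^-1)%:C.
Proof.
apply/matrixP => i j; rewrite !mxE.
case: (ord2P i) => ->; case: (ord2P j) => -> //=; cx; by field.
Qed.


Definition Hm (a x1 x2 x3 : R) : 'M[R[i]]_2 :=
  mk2 (a + x3)%:C (x1 +i* (- x2)) (x1 +i* x2) (a - x3)%:C.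

Lemma rhoE r : rho_theta 0 0 r = mk2 ((1 + r) / 2)%:C 0 0 ((1 - r) / 2)%:C.
Proof.
rewrite /rho_theta sigma1E sigma2E sigma3E mk2_1 !mk2_scale !mk2_add.
by congr mk2; cx; field.
Qed.

Lemma trZ r a b (x1 x2 x3 y1 y2 y3 : R) :
  let z := \tr (rho_theta 0 0 r *m Hm a x1 x2 x3 *m Hm b y1 y2 y3) in
  complex.Re z = (a + r * x3) * (b + r * y3) + x1 * y1 + x2 * y2 + (1 - r^+2) * x3 * y3
  /\ complex.Im z = r * (x1 * y2 - x2 * y1).
Proof.
rewrite /= rhoE /Hm !mk2_mul mk2_tr !cE; split; by field.
Qed.

Lemma trS1 a (x1 x2 x3 : R) : \tr (sigma1 R *m Hm a x1 x2 x3) = x1%:C.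
Proof. rewrite sigma1E /Hm mk2_mul mk2_tr; cx; by field. Qed.
Lemma trS2 a (x1 x2 x3 : R) : \tr (sigma2 R *m Hm a x1 x2 x3) = x2%:C.
Proof. rewrite sigma2E /Hm mk2_mul mk2_tr; cx; by field. Qed.
Lemma trS3 a (x1 x2 x3 : R) : \tr (sigma3 R *m Hm a x1 x2 x3) = x3%:C.
Proof. rewrite sigma3E /Hm mk2_mul mk2_tr; cx; by field. Qed.

Lemma trD r phi (k : 'I_2) a (x1 x2 x3 : R) :
  \tr (Dsub r phi k *m Hm a x1 x2 x3) =
  (if k == 0 :> nat then x1 else cos phi * x2 + sin phi * Num.sqrt (1 - r ^+ 2) * x3)%:C.
Proof.
rewrite /Dsub; case: ifP => _; first exact: trS1.
rewrite mulmxDl -!scalemxAl mxtraceD !mxtraceZ trS2 trS3.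
by rewrite -!rmorphM -rmorphD.
Qed.

Lemma herm_Hm a (x1 x2 x3 : R) : Defs.hermitian (Hm a x1 x2 x3).
Proof.
rewrite /Defs.hermitian /adjmx /Hm.
apply/matrixP => i j; rewrite !mxE.
case: (ord2P i) => ->; case: (ord2P j) => -> //=; cx; lra.
Qed.

Lemma herm_eq (X : 'M[R[i]]_2) : Defs.hermitian X ->
  X = Hm ((complex.Re (X 0 0) + complex.Re (X 1 1)) / 2) (complex.Re (X 1 0))
         (complex.Im (X 1 0)) ((complex.Re (X 0 0) - complex.Re (X 1 1)) / 2).
Proof.
rewrite /Defs.hermitian => H.
have E : forall i j, (X j i)^* = X i j.
  by move=> i j; have := congr1 (fun M : 'M[R[i]]_2 => M i j) H; rewrite !mxE.
rewrite [LHS]mk2E /Hm; congr mk2.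
- have := E 0 0; case: (X 0 0) => u v [] /= Hv; cx; lra.
- rewrite -(E 0 1); case: (X 1 0) => u v; cx; lra.
- cx; lra.
- have := E 1 1; case: (X 1 1) => u v [] /= Hv; cx; lra.
Qed.

End C.

Section D.
Variable R : realType.

Definition col2 (x y : R) : 'cV[R]_2 := \col_i (if i == 0 :> nat then x else y).

Lemma col2E (v : 'cV[R]_2) : v = col2 (v 0 0) (v 1 0).
Proof.
apply/matrixP => i j; rewrite !mxE (ord1 j).
by case: (ord2P i) => ->.
Qed.

Lemma quadE (p q q' t x y : R) :
  ((col2 x y)^T *m mk2 p q q' t *m col2 x y) 0 0 = p * x^+2 + (q + q') * x * y + t * y ^+2.
Proof.
rewrite !mxE !big_ord_recl !big_ord0 !mxE !big_ord_recl !big_ord0 !mxE /=.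
ring.
Qed.

Lemma psd_mk2 (p q q' t : R) : psd (mk2 p q q' t) ->
  [/\ q' = q, 0 <= p, 0 <= t, 0 <= p + 2 * q + t & 0 <= p - 2 * q + t].
Proof.
case=> HT Hv.
have Eq : q' = q by have := congr1 (fun M : 'M[R]_2 => M 0 1) HT; rewrite !mxE.
subst q'.
have := Hv (col2 1 0); have := Hv (col2 0 1); have := Hv (col2 1 1);
have := Hv (col2 1 (-1)); rewrite !quadE.
move=> h1 h2 h3 h4; split => //; nra.
Qed.

Lemma psd_of (p q t : R) : (forall x y, 0 <= p * x^+2 + 2 * q * x * y + t * y ^+2) ->
  psd (mk2 p q q t).
Proof.
move=> H; split; first by rewrite mk2_tp.
move=> v; rewrite (col2E v) quadE.
have := H (v 0 0) (v 1 0); lra.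
Qed.

Lemma msqrt_scalar (c : R) :
  msqrt (mk2 (c ^+ 2) 0 0 (c ^+ 2)) = mk2 `|c| 0 0 `|c|.
Proof.
apply: xget_unique.
  split.
    apply: psd_of => x y; have := normr_ge0 c; nra.
  by rewrite mk2_mul !mulr0 !mul0r !addr0 !add0r -expr2 real_normK ?num_real.
move=> S [HS HS2].
rewrite (mk2E S) in HS HS2 *.
move: (S 0 0) (S 0 1) (S 1 0) (S 1 1) HS HS2 => p q q' t HS HS2.
case: (psd_mk2 HS) => e10 hp ht h1 h2; subst q'.
rewrite mk2_mul in HS2.
have e00 := congr1 (fun M : 'M[R]_2 => M 0 0) HS2.
have e01 := congr1 (fun M : 'M[R]_2 => M 0 1) HS2.
have e11 := congr1 (fun M : 'M[R]_2 => M 1 1) HS2.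
rewrite !mxE /= in e00 e01 e11.
have hq : q = 0.
  have h0 : q * (p + t) = 0 by rewrite -e01; ring.
  have h : q ^+ 2 * (p + t) ^+ 2 = 0 by rewrite -exprMn h0 expr0n.
  have h' : 4 * q ^+ 2 <= (p + t) ^+ 2 by nra.
  have h'' : q ^+ 2 * (4 * q ^+ 2) <= 0 by rewrite -h; apply: ler_wpM2l => //; exact: sqr_ge0.
  have : q ^+ 4 <= 0 by nra.
  move=> h4; have : q ^+ 4 = 0 by have := sqr_ge0 (q ^+ 2); rewrite -exprM; lra.
  by move/eqP; rewrite expf_eq0 => /andP [_ /eqP].
subst q.
have hp2 : p ^+ 2 = c ^+ 2 by rewrite -e00; ring.
have ht2 : t ^+ 2 = c ^+ 2 by rewrite -e11; ring.
have hc : `|c| ^+ 2 = c ^+ 2 by rewrite real_normK ?num_real.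
have hc0 := normr_ge0 c.
have ep : p = `|c| by apply/eqP; rewrite eq_le; apply/andP; split; nra.
have et : t = `|c| by apply/eqP; rewrite eq_le; apply/andP; split; nra.
by rewrite ep et.
Qed.

Lemma col2_neq0 (x y : R) : x != 0 -> col2 x y != 0.
Proof.
move=> hx; apply/eqP => h.
have := congr1 (fun M : 'cV[R]_2 => M 0 0) h; rewrite !mxE /= => hx0.
by rewrite hx0 eqxx in hx.
Qed.

Lemma posdef_mk2 (G : 'M[R]_2) : posdef G ->
  [/\ G 1 0 = G 0 1, 0 < G 0 0, 0 < G 1 1 & 0 < G 0 0 * G 1 1 - G 0 1 ^+ 2].
Proof.
case=> HT Hv.
have e10 : G 1 0 = G 0 1 by have := congr1 (fun M : 'M[R]_2 => M 0 1) HT; rewrite !mxE.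
have Hq : forall x y, x != 0 -> 0 < G 0 0 * x ^+ 2 + 2 * G 0 1 * x * y + G 1 1 * y ^+ 2.
  move=> x y hx; have := Hv _ (col2_neq0 y hx); rewrite [G in _ *m G *m _]mk2E quadE e10.
  by congr (0 < _); ring.
have h1 : 0 < G 0 0 by have := Hq 1 0 (oner_neq0 _); lra.
have h3 : 0 < G 1 1.
  have := Hv _ (col2_neq0 1 (oner_neq0 R)); rewrite [G in _ *m G *m _]mk2E quadE.
  have := Hv (col2 0 1); rewrite [G in _ *m G *m _]mk2E quadE.
  have hh : col2 (0 : R) 1 != 0.
    apply/eqP => h; have := congr1 (fun M : 'cV[R]_2 => M 1 0) h; rewrite !mxE /=.
    by move/eqP; rewrite oner_eq0.
  move=> /(_ hh) h _; lra.
split => //.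
have hg : G 0 1 != 0 -> 0 < G 0 0 * G 1 1 - G 0 1 ^+ 2.
  move=> hg; have := Hq (G 0 1) (- G 0 0) hg => h.
  have : 0 < G 0 0 * (G 0 0 * G 1 1 - G 0 1 ^+ 2) by nra.
  by rewrite pmulr_rgt0.
case: (G 0 1 =P 0) => [->|/eqP]; last exact: hg.
rewrite expr0n /= subr0; exact: mulr_gt0.
Qed.

Lemma msqrt_spec (G : 'M[R]_2) : posdef G ->
  psd (msqrt G) /\ msqrt G *m msqrt G = G.
Proof.
move=> HG; case: (posdef_mk2 HG) => e10 h1 h3 hd.
suff : exists S : 'M[R]_2, psd S /\ S *m S = G.
  by move=> /(@xgetPex _ 0 [set S | psd S /\ S *m S = G]).
set g1 := G 0 0 in h1 hd *; set g2 := G 0 1 in e10 hd *; set g3 := G 1 1 in h3 hd *.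
set D := Num.sqrt (g1 * g3 - g2 ^+ 2).
have hD : 0 <= D by exact: sqrtr_ge0.
have hD2 : D ^+ 2 = g1 * g3 - g2 ^+ 2 by rewrite sqr_sqrtr // ltW.
set T := g1 + g3 + 2 * D.
have hT : 0 < T by rewrite /T; lra.
set k := (Num.sqrt T)^-1.
have hk : 0 <= k by rewrite invr_ge0 sqrtr_ge0.
have hk2 : k ^+ 2 * T = 1.
  by rewrite /k exprVn sqr_sqrtr ?ltW // mulVf // gt_eqF.
exists (mk2 (k * (g1 + D)) (k * g2) (k * g2) (k * (g3 + D))); split.
  apply: psd_of => x y.
  have hq : 0 <= g1 * x ^+ 2 + 2 * g2 * x * y + g3 * y ^+ 2.
    have : 0 <= g1 * (g1 * x ^+ 2 + 2 * g2 * x * y + g3 * y ^+ 2).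
      have -> : g1 * (g1 * x ^+ 2 + 2 * g2 * x * y + g3 * y ^+ 2) =
        (g1 * x + g2 * y) ^+ 2 + (g1 * g3 - g2 ^+ 2) * y ^+ 2 by ring.
      by apply: addr_ge0; [exact: sqr_ge0|apply: mulr_ge0; [lra|exact: sqr_ge0]].
    by rewrite pmulr_rge0.
  have -> : k * (g1 + D) * x ^+ 2 + 2 * (k * g2) * x * y + k * (g3 + D) * y ^+ 2 =
    k * ((g1 * x ^+ 2 + 2 * g2 * x * y + g3 * y ^+ 2) + D * (x ^+ 2 + y ^+ 2)) by ring.
  apply: mulr_ge0 => //; apply: addr_ge0 => //; apply: mulr_ge0 => //.
  by apply: addr_ge0; exact: sqr_ge0.
rewrite mk2_mul [RHS]mk2E e10 -/g1 -/g2 -/g3; congr mk2.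
- transitivity (k ^+ 2 * T * g1); last by rewrite hk2 mul1r.
  transitivity (k ^+ 2 * (g1 ^+ 2 + 2 * g1 * D + D ^+ 2 + g2 ^+ 2)); first ring.
  rewrite hD2 /T; ring.
- transitivity (k ^+ 2 * T * g2); last by rewrite hk2 mul1r.
  rewrite /T; ring.
- transitivity (k ^+ 2 * T * g2); last by rewrite hk2 mul1r.
  rewrite /T; ring.
- transitivity (k ^+ 2 * T * g3); last by rewrite hk2 mul1r.
  transitivity (k ^+ 2 * (g3 ^+ 2 + 2 * g3 * D + D ^+ 2 + g2 ^+ 2)); first ring.
  rewrite hD2 /T; ring.
Qed.

Lemma trZre (r a b x1 x2 x3 y1 y2 y3 : R) :
  complex.Re (\tr (rho_theta 0 0 r *m Hm a x1 x2 x3 *m Hm b y1 y2 y3)) =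
  (a + r * x3) * (b + r * y3) + x1 * y1 + x2 * y2 + (1 - r^+2) * x3 * y3.
Proof. exact: (proj1 (trZ r a b x1 x2 x3 y1 y2 y3)). Qed.
Lemma trZim (r a b x1 x2 x3 y1 y2 y3 : R) :
  complex.Im (\tr (rho_theta 0 0 r *m Hm a x1 x2 x3 *m Hm b y1 y2 y3)) =
  r * (x1 * y2 - x2 * y1).
Proof. exact: (proj2 (trZ r a b x1 x2 x3 y1 y2 y3)). Qed.

Definition Zf (r : R) (a u1 u2 u3 : 'I_2 -> R) (k j : 'I_2) : R :=
  (a k + r * u3 k) * (a j + r * u3 j) + u1 k * u1 j + u2 k * u2 j
  + (1 - r ^+ 2) * u3 k * u3 j.

Lemma tr_sandwich (S A G : 'M[R]_2) : S *m S = G -> \tr (S *m A *m S) = \tr (G *m A).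
Proof. by move=> <-; rewrite mxtrace_mulC mulmxA. Qed.

Lemma cost_formula r (G : 'M[R]_2) (X : 'I_2 -> 'M[R[i]]_2) (a u1 u2 u3 : 'I_2 -> R) :
  posdef G -> (forall k, X k = Hm (a k) (u1 k) (u2 k) (u3 k)) ->
  Ccost r G X = G 0 0 * Zf r a u1 u2 u3 0 0 + 2 * G 0 1 * Zf r a u1 u2 u3 0 1
     + G 1 1 * Zf r a u1 u2 u3 1 1
     + 2 * `|r * (u1 0 * u2 1 - u2 0 * u1 1)| * Num.sqrt (\det G).
Proof.
move=> HG HX.
case: (posdef_mk2 HG) => e10 h1 h3 hd.
have ER : Defs.ReM (Zmat r X) = mk2 (Zf r a u1 u2 u3 0 0) (Zf r a u1 u2 u3 0 1)
    (Zf r a u1 u2 u3 1 0) (Zf r a u1 u2 u3 1 1).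
  apply/matrixP => i j; rewrite /Defs.ReM /Zmat [LHS]mxE cRe_half [in LHS]mxE !HX trZre.
  by case: (ord2P i) => ->; case: (ord2P j) => -> ; rewrite /mk2 mxE /=.
set b := r * (u1 0 * u2 1 - u2 0 * u1 1).
have EI : Defs.ImM (Zmat r X) = mk2 0 b (- b) 0.
  apply/matrixP => i j; rewrite /Defs.ImM /Zmat [LHS]mxE cIm_half [in LHS]mxE !HX trZim.
  case: (ord2P i) => ->; case: (ord2P j) => -> ; rewrite /mk2 mxE /= /b; ring.
case: (msqrt_spec HG) => HS HSS.
rewrite /Ccost (tr_sandwich _ HSS) ER EI.
rewrite [G in G *m _]mk2E mk2_mul mk2_tr.
move: HS HSS; set S := msqrt G => HS HSS.
rewrite (mk2E S) in HS HSS *.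
move: (S 0 0) (S 0 1) (S 1 0) (S 1 1) HS HSS => p q q' t HS HSS.
case: (psd_mk2 HS) => eq' _ _ _ _; subst q'.
set beta := b * (p * t - q * q).
have EM : mk2 p q q t *m mk2 0 b (- b) 0 *m mk2 p q q t = mk2 0 beta (- beta) 0.
  by rewrite !mk2_mul /beta; congr mk2; ring.
have EM2 : (mk2 0 beta (- beta) 0)^T *m mk2 0 beta (- beta) 0 = mk2 (beta ^+ 2) 0 0 (beta ^+ 2).
  by rewrite mk2_tp mk2_mul; congr mk2; ring.
rewrite /mabs EM EM2 msqrt_scalar mk2_tr.
have Edet : \det G = (p * t - q * q) ^+ 2.
  by rewrite -HSS det_mulmx mk2_det; ring.
rewrite Edet sqrtr_sqr /beta normrM e10.
have -> : Zf r a u1 u2 u3 1 0 = Zf r a u1 u2 u3 0 1 by rewrite /Zf; ring.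
ring.
Qed.

End D.

Section E.
Variable R : realType.

Definition costE (r g1 g2 g3 D a0 a1 P Q U W : R) :=
  g1 * ((a0 + r * Q) * (a0 + r * Q) + 1 * 1 + P * P + (1 - r ^+ 2) * Q * Q)
  + 2 * g2 * ((a0 + r * Q) * (a1 + r * W) + 1 * 0 + P * U + (1 - r ^+ 2) * Q * W)
  + g3 * ((a1 + r * W) * (a1 + r * W) + 0 * 0 + U * U + (1 - r ^+ 2) * W * W)
  + 2 * `|r * (1 * U - P * 0)| * D.

Lemma cost_reduce (r c s sg g1 g2 g3 D a0 a1 P Q U W : R) :
  c ^+ 2 + s ^+ 2 = 1 -> sg ^+ 2 = 1 - r ^+ 2 -> 0 < g1 -> D ^+ 2 = g1 * g3 - g2 ^+ 2 ->
  c * P + s * sg * Q = 0 -> c * U + s * sg * W = 1 ->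
  let tau := - s * U + c * (sg * W) in
  exists2 y, 0 <= y &
  costE r g1 g2 g3 D a0 a1 P Q U W =
    y + g1 + g3 + D ^+ 2 * tau ^+ 2 / g1 + 2 * `|r * (c - s * tau)| * D.
Proof.
move=> hcs hsg hg1 hD h1 h2 tau.
pose w := sg * Q; pose z := sg * W.
pose t := - s * P + c * w.
have h1' : c * P + s * w = 0 by rewrite -h1 /w; ring.
have h2' : c * U + s * z = 1 by rewrite -h2 /z; ring.
have e1 : P * P + w ^+ 2 = t ^+ 2.
  transitivity ((c ^+ 2 + s ^+ 2) * (P * P + w ^+ 2)); first by rewrite hcs mul1r.
  transitivity ((c * P + s * w) ^+ 2 + t ^+ 2); first by rewrite /t; ring.
  by rewrite h1'; ring.
have e2 : P * U + w * z = t * tau.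
  transitivity ((c ^+ 2 + s ^+ 2) * (P * U + w * z)); first by rewrite hcs mul1r.
  transitivity ((c * P + s * w) * (c * U + s * z) + t * tau); first by rewrite /t /tau /z; ring.
  by rewrite h1'; ring.
have e3 : U * U + z ^+ 2 = 1 + tau ^+ 2.
  transitivity ((c ^+ 2 + s ^+ 2) * (U * U + z ^+ 2)); first by rewrite hcs mul1r.
  transitivity ((c * U + s * z) ^+ 2 + tau ^+ 2); first by rewrite /tau /z; ring.
  by rewrite h2'; ring.
have e4 : U = c - s * tau.
  transitivity ((c ^+ 2 + s ^+ 2) * U); first by rewrite hcs mul1r.
  transitivity (c * (c * U + s * z) - s * tau); first by rewrite /tau /z; ring.
  by rewrite h2'; ring.
pose y0 := a0 + r * Q; pose y1 := a1 + r * W.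
pose Qf := g1 * t ^+ 2 + 2 * g2 * t * tau + g3 * tau ^+ 2.
exists (g1 * y0 ^+ 2 + 2 * g2 * y0 * y1 + g3 * y1 ^+ 2 + (Qf - D ^+ 2 * tau ^+ 2 / g1)).
  apply: addr_ge0.
    rewrite -(pmulr_rge0 _ hg1).
    have -> : g1 * (g1 * y0 ^+ 2 + 2 * g2 * y0 * y1 + g3 * y1 ^+ 2) =
      (g1 * y0 + g2 * y1) ^+ 2 + (g1 * g3 - g2 ^+ 2) * y1 ^+ 2 by ring.
    by rewrite -hD; apply: addr_ge0; [exact: sqr_ge0 | apply: mulr_ge0; exact: sqr_ge0].
  rewrite -(pmulr_rge0 _ hg1).
  have -> : g1 * (Qf - D ^+ 2 * tau ^+ 2 / g1) = (g1 * t + g2 * tau) ^+ 2.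
    rewrite /Qf hD; field; exact: lt0r_neq0.
  exact: sqr_ge0.
rewrite /costE -e4 -hsg.
have -> : r * (1 * U - P * 0) = r * U by ring.
transitivity (g1 * y0 ^+ 2 + 2 * g2 * y0 * y1 + g3 * y1 ^+ 2 + g1 + g3
  + g1 * (P * P + w ^+ 2) + 2 * g2 * (P * U + w * z) + g3 * (U * U + z ^+ 2 - 1)
  + 2 * `|r * U| * D).
  by rewrite /y0 /y1 /w /z; ring.
rewrite e1 e2 e3 /Qf; ring.
Qed.

Lemma lower_bound (r c s sg g1 g2 g3 D T dG a0 a1 P Q U W : R) :
  0 < r -> 0 <= c -> 0 <= s -> c ^+ 2 + s ^+ 2 = 1 -> sg ^+ 2 = 1 - r ^+ 2 ->
  0 < g1 -> 0 < D -> D ^+ 2 = g1 * g3 - g2 ^+ 2 -> T = g1 + g3 -> dG = D ^+ 2 ->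
  c * P + s * sg * Q = 0 -> c * U + s * sg * W = 1 ->
  (if r * g1 * s ^+ 2 < D * c then T + 2 * r * c * D - r ^+ 2 * s ^+ 2 * g1
   else T + dG / g1 * (c / s) ^+ 2) <= costE r g1 g2 g3 D a0 a1 P Q U W.
Proof.
move=> hr hc hs hcs hsg hg1 hD hD2 hT hdG h1 h2.
case: (cost_reduce a0 a1 hcs hsg hg1 hD2 h1 h2) => y hy ->.
set tau := - s * U + c * (sg * W).
set K := D ^+ 2 * tau ^+ 2 / g1.
have hK : g1 * K = D ^+ 2 * tau ^+ 2 by rewrite /K; field; exact: lt0r_neq0.
set e := c - s * tau.
rewrite normrM (gtr0_norm hr).
set A := `|e|.
have hA : e <= A := ler_norm e.
have hA0 : 0 <= A := normr_ge0 e.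
rewrite hT hdG.
case: ifP => hcond.
  have h3 : 0 <= K - 2 * r * D * s * tau + r ^+ 2 * s ^+ 2 * g1.
    rewrite -(pmulr_rge0 _ hg1).
    have -> : g1 * (K - 2 * r * D * s * tau + r ^+ 2 * s ^+ 2 * g1) =
      (D * tau - r * s * g1) ^+ 2 by rewrite mulrDr mulrBr hK; ring.
    exact: sqr_ge0.
  have h4 : r * D * e <= r * D * A by apply: ler_wpM2l => //; apply: mulr_ge0; lra.
  rewrite /e in h4; nra.
move/negbT: hcond; rewrite -leNgt => hcond.
have hs0 : 0 < s.
  rewrite lt0r hs andbT; apply/eqP => hs0.
  rewrite hs0 expr0n /= addr0 in hcs.
  have hc1 : c = 1 by nra.
  move: hcond; rewrite hs0 hc1 expr0n /= mulr0 mulr1; lra.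
have hgs : 0 < g1 * s ^+ 2 by apply: mulr_gt0 => //; exact: exprn_gt0.
suff : D ^+ 2 / g1 * (c / s) ^+ 2 <= K + 2 * (r * A) * D by lra.
rewrite -(ler_pM2l hgs).
have -> : g1 * s ^+ 2 * (D ^+ 2 / g1 * (c / s) ^+ 2) = D ^+ 2 * c ^+ 2.
  by field; apply/andP; split; apply: lt0r_neq0.
have -> : g1 * s ^+ 2 * (K + 2 * (r * A) * D) = D ^+ 2 * (c - e) ^+ 2 + 2 * r * A * D * g1 * s ^+ 2.
  by rewrite mulrDr [g1 * _ * K]mulrAC hK /e; ring.
have h5 : D ^+ 2 * (c * e) <= D ^+ 2 * (c * A).
  by apply: ler_wpM2l; [exact: sqr_ge0 | apply: ler_wpM2l].
have h6 : 0 <= D * A * (r * g1 * s ^+ 2 - D * c).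
  by apply: mulr_ge0; [apply: mulr_ge0; lra | lra].
have h7 : 0 <= D ^+ 2 * e ^+ 2 by apply: mulr_ge0; exact: sqr_ge0.
nra.
Qed.

Lemma attain (r c s sg g1 g2 g3 D tau : R) :
  c ^+ 2 + s ^+ 2 = 1 -> sg ^+ 2 = 1 - r ^+ 2 -> sg != 0 -> 0 < g1 ->
  D ^+ 2 = g1 * g3 - g2 ^+ 2 -> 0 <= r -> 0 <= c - s * tau ->
  let t := - g2 * tau / g1 in
  let P := - s * t in let Q := c * t / sg in
  let U := c - s * tau in let W := (s + c * tau) / sg in
  [/\ c * P + s * sg * Q = 0, c * U + s * sg * W = 1 &
   costE r g1 g2 g3 D (- r * Q) (- r * W) P Q U W =
     g1 + g3 + D ^+ 2 * tau ^+ 2 / g1 + 2 * r * (c - s * tau) * D].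
Proof.
move=> hcs hsg hsg0 hg1 hD hr hU t P Q U W.
have hg10 : g1 != 0 by exact: lt0r_neq0.
split.
- by rewrite /P /Q; field.
- by rewrite /U /W -hcs; field.
rewrite /costE.
have -> : r * (1 * U - P * 0) = r * U by ring.
rewrite normrM (ger0_norm hr) (ger0_norm hU) -hsg.
transitivity (g1 * (1 + (c ^+ 2 + s ^+ 2) * t ^+ 2) + 2 * g2 * ((c ^+ 2 + s ^+ 2) * t * tau)
   + g3 * ((c ^+ 2 + s ^+ 2) * (1 + tau ^+ 2)) + 2 * (r * (c - s * tau)) * D).
  by rewrite /P /Q /U /W; field.
by rewrite hcs hD /t; field.
Qed.

End E.

Lemma o10 : ((1 : 'I_2) == 0) = false. Proof. by []. Qed.
Lemma o01 : ((0 : 'I_2) == 1) = false. Proof. by []. Qed.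

Lemma exists_X (R : realType) (r phi tau : R) (G : 'M[R]_2) :
  0 <= r < 1 -> posdef G -> 0 <= cos phi - sin phi * tau ->
  exists X, feasible (Dsub r phi) X /\
    Ccost r G X = G 0 0 + G 1 1 + Num.sqrt (\det G) ^+ 2 * tau ^+ 2 / G 0 0
       + 2 * r * (cos phi - sin phi * tau) * Num.sqrt (\det G).
Proof.
move=> /andP[hr0 hr1] HG hU.
case: (posdef_mk2 HG) => e10 h1 h3 hd.
have hdet : \det G = G 0 0 * G 1 1 - G 0 1 ^+ 2.
  by have := mk2_det (G 0 0) (G 0 1) (G 1 0) (G 1 1); rewrite -mk2E e10 => ->; ring.
have hD2 : Num.sqrt (\det G) ^+ 2 = G 0 0 * G 1 1 - G 0 1 ^+ 2.
  by rewrite sqr_sqrtr hdet ?ltW.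
have h1r : 0 < 1 - r ^+ 2 by nra.
have hsg : Num.sqrt (1 - r ^+ 2) ^+ 2 = 1 - r ^+ 2 by rewrite sqr_sqrtr // ltW.
have hsg0 : Num.sqrt (1 - r ^+ 2) != 0 by rewrite gt_eqF // sqrtr_gt0.
case: (attain (cos2Dsin2 phi) hsg hsg0 h1 hD2 hr0 hU).
set t := - G 0 1 * tau / G 0 0.
set P := - sin phi * t.
set Q := cos phi * t / Num.sqrt (1 - r ^+ 2).
set U := cos phi - sin phi * tau.
set W := (sin phi + cos phi * tau) / Num.sqrt (1 - r ^+ 2).
move=> c1 c2 Ecost.
pose a := fun k : 'I_2 => if k == 0 :> nat then - r * Q else - r * W.
pose u1 := fun k : 'I_2 => if k == 0 :> nat then 1 else 0 : R.
pose u2 := fun k : 'I_2 => if k == 0 :> nat then P else U.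
pose u3 := fun k : 'I_2 => if k == 0 :> nat then Q else W.
exists (fun k => Hm (a k) (u1 k) (u2 k) (u3 k)); split.
  split; first by move=> j; exact: herm_Hm.
  move=> j k; rewrite trD.
  case: (ord2P j) => ->; case: (ord2P k) => -> /=; rewrite ?eqxx ?o10 ?o01 /=.
  - by [].
  - by rewrite c1.
  - by [].
  - by rewrite c2.
rewrite (@cost_formula _ r G _ a u1 u2 u3 HG (fun k => erefl)).
rewrite -Ecost /costE /Zf /=.
done.
Qed.

Lemma herm_params (R : realType) (X : 'I_2 -> 'M[R[i]]_2) :
  (forall j, Defs.hermitian (X j)) ->
  exists a u1 u2 u3 : 'I_2 -> R, forall k, X k = Hm (a k) (u1 k) (u2 k) (u3 k).
Proof.
move=> H.
exists (fun k => (complex.Re (X k 0 0) + complex.Re (X k 1 1)) / 2),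
  (fun k => complex.Re (X k 1 0)), (fun k => complex.Im (X k 1 0)),
  (fun k => (complex.Re (X k 0 0) - complex.Re (X k 1 1)) / 2).
move=> k; exact: herm_eq.
Qed.

Theorem mainTheorem10 (R : realType) (r phi : R) (G : 'M[R]_2) :
  0 < r < 1 ->
  0 <= phi <= pi / 2 ->
  posdef G ->
  holevo_bound_is r (Dsub r phi) G
    (if r * G 0 0 * sin phi ^+ 2 < Num.sqrt (\det G) * cos phi
     then \tr G + 2 * r * cos phi * Num.sqrt (\det G)
          - r ^+ 2 * sin phi ^+ 2 * G 0 0
     else \tr G + \det G / G 0 0 * (cos phi / sin phi) ^+ 2).
Proof.
move=> /andP[hr0 hr1] /andP[hp0 hp1] HG.
case: (posdef_mk2 HG) => e10 h1 h3 hd.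
have hdet : \det G = G 0 0 * G 1 1 - G 0 1 ^+ 2.
  by have := mk2_det (G 0 0) (G 0 1) (G 1 0) (G 1 1); rewrite -mk2E e10 => ->; ring.
have htr : \tr G = G 0 0 + G 1 1.
  by have := mk2_tr (G 0 0) (G 0 1) (G 1 0) (G 1 1); rewrite -mk2E.
have hD2 : Num.sqrt (\det G) ^+ 2 = G 0 0 * G 1 1 - G 0 1 ^+ 2.
  by rewrite sqr_sqrtr hdet ?ltW.
have hD : 0 < Num.sqrt (\det G) by rewrite sqrtr_gt0 hdet.
have hdG : \det G = Num.sqrt (\det G) ^+ 2 by rewrite hD2.
have hpi := pi_gt0 R.
have hc : 0 <= cos phi by apply: cos_ge0_pihalf; apply/andP; split; lra.
have hs : 0 <= sin phi by apply: sin_ge0_pi; apply/andP; split; lra.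
have hcs := cos2Dsin2 phi.
have h1r : 0 < 1 - r ^+ 2 by nra.
have hsg : Num.sqrt (1 - r ^+ 2) ^+ 2 = 1 - r ^+ 2 by rewrite sqr_sqrtr // ltW.
split.
  case: ifP => hcond.
    have hU : 0 <= cos phi - sin phi * (r * sin phi * G 0 0 / Num.sqrt (\det G)).
      have -> : cos phi - sin phi * (r * sin phi * G 0 0 / Num.sqrt (\det G)) =
        (Num.sqrt (\det G) * cos phi - r * G 0 0 * sin phi ^+ 2) / Num.sqrt (\det G).
        by field; exact: lt0r_neq0.
      by apply: divr_ge0; lra.
    have [X [HX EX]] := exists_X (r:=r) (phi:=phi) (G:=G) (ltac:(apply/andP; split; [exact: ltW | exact: hr1])) HG hU.
    exists X; split => //; rewrite EX htr.
    field; apply/andP; split; exact: lt0r_neq0.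
  have hs0 : 0 < sin phi.
    rewrite lt0r hs andbT; apply/eqP => hs0.
    rewrite hs0 expr0n /= addr0 in hcs.
    have hc1 : cos phi = 1 by nra.
    move: hcond; rewrite hs0 hc1 expr0n /= mulr0 mulr1 => /negbT; rewrite -leNgt; lra.
  have hU : 0 <= cos phi - sin phi * (cos phi / sin phi).
    by rewrite mulrC divfK ?subrr // lt0r_neq0.
  have [X [HX EX]] := exists_X (r:=r) (phi:=phi) (G:=G) (ltac:(apply/andP; split; [exact: ltW | exact: hr1])) HG hU.
  exists X; split => //; rewrite EX htr [in RHS]hdG.
  by field; apply/andP; split; exact: lt0r_neq0.
move=> X [HH Htr].
have [a [u1 [u2 [u3 HX]]]] := herm_params HH.
rewrite (cost_formula r HG HX).
have c00 := Htr 0 0; have c10 := Htr 1 0; have c01 := Htr 0 1; have c11 := Htr 1 1.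
rewrite !HX !trD /= ?eqxx ?o10 ?o01 /= in c00 c10 c01 c11.
move/(congr1 (@complex.Re R)): c00 => /= c00.
move/(congr1 (@complex.Re R)): c10 => /= c10.
move/(congr1 (@complex.Re R)): c01 => /= c01.
move/(congr1 (@complex.Re R)): c11 => /= c11.
rewrite /Zf c00 c10.
have := lower_bound (a 0) (a 1) hr0 hc hs hcs hsg h1 hD hD2 htr hdG c01 c11.
by rewrite /costE.
Qed.
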